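(* Let $A$ be a centrally essential ring such that the factor ring $A/J(A)$ by the Jacobson radical is not commutative. Then the polynomial ring $A[x]$ (in a central indeterminate $x$) is centrally essential but is neither right quasi-invariant nor left quasi-invariant.
   Context: All rings are associative, unital and non-zero. $Z(A)$ denotes the center of a ring $A$. A ring $A$ is centrally essential if either $A$ is commutative or for every non-central element $a\in A$ there exist non-zero central elements $x,y\in Z(A)$ with $ax=y$. A ring is right (resp. left) quasi-invariant if every maximal right (resp. left) ideal of it is a two-sided ideal. *)

(* Defs.v *)
From HB Require Import structures.
From mathcomp Require Import all_boot all_order all_algebra.
Set Implicit Arguments. Unset Strict Implicit. Unset Printing Implicit Defensive.
Import GRing.Theory.
Local Open Scope ring_scope.

Definition central (R : nzRingType) (x : R) : Prop := forall y : R, x * y = y * x.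

Definition commutative_ring (R : nzRingType) : Prop := forall a b : R, a * b = b * a.

Definition centrally_essential (R : nzRingType) : Prop :=
  commutative_ring R \/
  forall a : R, ~ central a ->
    exists x y : R, [/\ x <> 0, y <> 0, central x, central y & a * x = y].

Definition additive_subgroup (R : nzRingType) (I : R -> Prop) : Prop :=
  [/\ I 0, forall a b, I a -> I b -> I (a + b) & forall a, I a -> I (- a)].

Definition right_ideal (R : nzRingType) (I : R -> Prop) : Prop :=
  additive_subgroup I /\ forall a r, I a -> I (a * r).

Definition left_ideal (R : nzRingType) (I : R -> Prop) : Prop :=
  additive_subgroup I /\ forall a r, I a -> I (r * a).

Definition two_sided_ideal (R : nzRingType) (I : R -> Prop) : Prop :=
  right_ideal I /\ left_ideal I.

Definition proper (R : nzRingType) (I : R -> Prop) : Prop := exists a, ~ I a.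

Definition maximal_right_ideal (R : nzRingType) (M : R -> Prop) : Prop :=
  [/\ right_ideal M, proper M &
      forall N : R -> Prop, right_ideal N -> proper N ->
        (forall a, M a -> N a) -> forall a, N a -> M a].

Definition maximal_left_ideal (R : nzRingType) (M : R -> Prop) : Prop :=
  [/\ left_ideal M, proper M &
      forall N : R -> Prop, left_ideal N -> proper N ->
        (forall a, M a -> N a) -> forall a, N a -> M a].

Definition jacobson (R : nzRingType) (a : R) : Prop :=
  forall M : R -> Prop, maximal_right_ideal M -> M a.

(* The factor ring R/J(R) is commutative iff all commutators lie in J(R). *)
Definition factor_by_jacobson_commutative (R : nzRingType) : Prop :=
  forall a b : R, jacobson (a * b - b * a).

Definition right_quasi_invariant (R : nzRingType) : Prop :=
  forall M : R -> Prop, maximal_right_ideal M -> two_sided_ideal M.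

Definition left_quasi_invariant (R : nzRingType) : Prop :=
  forall M : R -> Prop, maximal_left_ideal M -> two_sided_ideal M.

(* Main.v *)
Require Import Defs.
From mathcomp Require Import all_boot all_algebra.
From mathcomp Require classical_sets.
From Stdlib Require Import Classical.
Set Implicit Arguments. Unset Strict Implicit. Unset Printing Implicit Defensive.
Import GRing.Theory.
Local Open Scope ring_scope.

Section Lev.
Variable (A : nzRingType) (t : A).
Definition levr (p : {poly A}) := \sum_(i < size p) t ^+ i * p`_i.

Lemma levr_wide n (p : {poly A}) : (size p <= n)%N -> levr p = \sum_(i < n) t ^+ i * p`_i.
Proof.
move=> le_p_n.
rewrite /levr (big_ord_widen n (fun i => t ^+ i * p`_i)) // big_mkcond.
by apply: eq_bigr => i _; case: ltnP => // le_p_i; rewrite nth_default ?mulr0.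
Qed.

Lemma levrD (p q : {poly A}) : levr (p + q) = levr p + levr q.
Proof.
pose n := maxn (size p) (size q).
rewrite (@levr_wide n (p + q)); last by rewrite (leq_trans (size_polyD _ _)).
rewrite (@levr_wide n p) ?leq_maxl // (@levr_wide n q) ?leq_maxr //.
by rewrite -big_split /=; apply: eq_bigr => i _; rewrite coefD mulrDr.
Qed.

Lemma levrN (p : {poly A}) : levr (- p) = - levr p.
Proof.
rewrite /levr size_polyN -sumrN; apply: eq_bigr => i _; by rewrite coefN mulrN.
Qed.

Lemma levr0 : levr 0 = 0.
Proof. by rewrite /levr size_poly0 big_ord0. Qed.

Lemma levrMC (p : {poly A}) c : levr (p * c%:P) = levr p * c.
Proof.
rewrite (@levr_wide (size p) (p * c%:P)); last first.
  by rewrite (leq_trans (size_polyMleq _ _)) // size_polyC; case: (c != 0); rewrite ?addn1 ?addn0 //= leq_pred.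
rewrite /levr mulr_suml; apply: eq_bigr => i _; by rewrite coefMC mulrA.
Qed.

Lemma levrMX (p : {poly A}) : levr (p * 'X) = t * levr p.
Proof.
rewrite (@levr_wide (size p).+1 (p * 'X)); last first.
  have [->|pn0] := eqVneq p 0; first by rewrite mul0r size_poly0.
  by rewrite size_mulX.
rewrite big_ord_recl coefMX /= mulr0 add0r /levr mulr_sumr.
apply: eq_bigr => i _; by rewrite coefMX /= exprS mulrA.
Qed.

Lemma levrC c : levr c%:P = c.
Proof.
rewrite (@levr_wide 1 c%:P); last by rewrite size_polyC leq_b1.
by rewrite big_ord1 coefC /= expr0 mul1r.
Qed.

Lemma levrX : levr 'X = t.
Proof. by rewrite -['X]mul1r -polyC1 levrMX levrC mulr1. Qed.
End Lev.

Section Id.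
Variable A : nzRingType.

Lemma notall (P : A -> Prop) : ~ (exists a, ~ P a) -> forall a, P a.
Proof. by move=> h a; apply: NNPP => na; apply: h; exists a. Qed.

Lemma rnot1 (M : A -> Prop) : right_ideal M -> Defs.proper M -> ~ M 1.
Proof. by move=> [_ hM] [a na] M1; apply: na; rewrite -(mul1r a); apply: hM. Qed.

Lemma lnot1 (M : A -> Prop) : left_ideal M -> Defs.proper M -> ~ M 1.
Proof. by move=> [_ hM] [a na] M1; apply: na; rewrite -(mulr1 a); apply: hM. Qed.

Lemma comax_r (M : A -> Prop) u : maximal_right_ideal M -> ~ M u ->
  exists v m, M m /\ u * v + m = 1.
Proof.
move=> [[[M0 MD MN] MM] pM Mmax] nMu.
pose N := fun z => exists v m, M m /\ z = u * v + m.
suff : N 1 by move=> [v [m [Mm e]]]; exists v, m.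
apply: (notall (P := N)) => pN.
apply: nMu; apply: (Mmax N) => //; last by exists 1, 0; rewrite mulr1 addr0.
- split; first split.
  + by exists 0, 0; rewrite mulr0 addr0.
  + move=> a b [v [m [Mm ->]]] [v' [m' [Mm' ->]]].
    exists (v + v'), (m + m'); split; first exact: MD.
    by rewrite mulrDr addrACA.
  + move=> a [v [m [Mm ->]]]; exists (- v), (- m); split; first exact: MN.
    by rewrite opprD mulrN.
  + move=> a r [v [m [Mm ->]]]; exists (v * r), (m * r); split; first exact: MM.
    by rewrite mulrDl mulrA.
- by move=> a Ma; exists 0, a; rewrite mulr0 add0r.
Qed.

Lemma comax_l (M : A -> Prop) u : maximal_left_ideal M -> ~ M u ->
  exists v m, M m /\ v * u + m = 1.
Proof.
move=> [[[M0 MD MN] MM] pM Mmax] nMu.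
pose N := fun z => exists v m, M m /\ z = v * u + m.
suff : N 1 by move=> [v [m [Mm e]]]; exists v, m.
apply: (notall (P := N)) => pN.
apply: nMu; apply: (Mmax N) => //; last by exists 1, 0; rewrite mul1r addr0.
- split; first split.
  + by exists 0, 0; rewrite mul0r addr0.
  + move=> a b [v [m [Mm ->]]] [v' [m' [Mm' ->]]].
    exists (v + v'), (m + m'); split; first exact: MD.
    by rewrite mulrDl addrACA.
  + move=> a [v [m [Mm ->]]]; exists (- v), (- m); split; first exact: MN.
    by rewrite opprD mulNr.
  + move=> a r [v [m [Mm ->]]]; exists (r * v), (r * m); split; first exact: MM.
    by rewrite mulrDr mulrA.
- by move=> a Ma; exists 0, a; rewrite mul0r add0r.
Qed.

Lemma Qr_max (M : A -> Prop) t : maximal_right_ideal M ->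
  (forall m, M m -> M (t * m)) ->
  maximal_right_ideal (fun f : {poly A} => M (levr t f)).
Proof.
move=> Mmx Mt; have [[[M0 MD MN] MM] pM Mmax] := Mmx.
have nM1 : ~ M 1 by apply: rnot1 => //; split.
have rI : right_ideal (fun f : {poly A} => M (levr t f)).
  split; first split.
  - by rewrite levr0.
  - by move=> a b Ma Mb; rewrite levrD; apply: MD.
  - by move=> a Ma; rewrite levrN; apply: MN.
  move=> f g Mf; elim/poly_ind: g => [|q c IH]; first by rewrite mulr0 levr0.
  rewrite mulrDr mulrA levrD levrMX levrMC; apply: MD; first exact: Mt.
  exact: MM.
split => //.
  by exists 1; rewrite -polyC1 levrC.
move=> N rN pN QN f Nf; apply: NNPP => nMf.
have [v [m [Mm e]]] := comax_r Mmx nMf.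
have [[N0 ND NN] NM] := rN.
have N1 : N 1.
  have -> : (1 : {poly A}) = f * v%:P - (f * v%:P - 1) by rewrite opprB addrC subrK.
  apply: ND; first exact: NM.
  apply: NN; apply: QN.
  rewrite levrD levrN levrMC -polyC1 levrC.
  have -> : levr t f * v - 1 = - m by rewrite -e opprD addNKr.
  by apply: MN.
by case: pN => z; apply; rewrite -(mul1r z); apply: NM.
Qed.

Lemma Ql_max (M : A -> Prop) t : maximal_left_ideal M ->
  (forall m, M m -> M (m * t)) ->
  maximal_left_ideal (fun f : {poly A} => M f.[t]).
Proof.
move=> Mmx Mt; have [[[M0 MD MN] MM] pM Mmax] := Mmx.
have nM1 : ~ M 1 by apply: lnot1 => //; split.
have lI : left_ideal (fun f : {poly A} => M f.[t]).
  split; first split.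
  - by rewrite horner0.
  - by move=> a b Ma Mb; rewrite hornerD; apply: MD.
  - by move=> a Ma; rewrite hornerN; apply: MN.
  move=> f g Mf; elim/poly_ind: g => [|q c IH]; first by rewrite mul0r horner0.
  rewrite mulrDl -mulrA -(commr_polyX f) mulrA hornerD hornerMX hornerCM.
  apply: MD; first exact: Mt.
  exact: MM.
split => //.
  by exists 1; rewrite hornerC.
move=> N lN pN QN f Nf; apply: NNPP => nMf.
have [v [m [Mm e]]] := comax_l Mmx nMf.
have [[N0 ND NN] NM] := lN.
have N1 : N 1.
  have -> : (1 : {poly A}) = v%:P * f - (v%:P * f - 1) by rewrite opprB addrC subrK.
  apply: ND; first exact: NM.
  apply: NN; apply: QN.
  rewrite hornerD hornerN hornerCM hornerC.
  have -> : v * f.[t] - 1 = - m by rewrite -e opprD addNKr.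
  by apply: MN.
by case: pN => z; apply; rewrite -(mulr1 z); apply: NM.
Qed.
End Id.

Lemma exists_max_left (R : nzRingType) (I : R -> Prop) :
  left_ideal I -> ~ I 1 ->
  exists L, maximal_left_ideal L /\ (forall z, I z -> L z).
Proof.
move=> lI nI1.
pose P := fun J : R -> Prop =>
  (forall z, ~ J z) \/ [/\ left_ideal J, ~ J 1 & forall z, I z -> J z].
have := @classical_sets.Zorn_bigcup R P.
case.
- move=> F FP Ftot.
  case: (classic (exists X z, F X /\ X z)) => [[X0 [z0 [FX0 X0z0]]]|nF]; last first.
    by left => z [X FX Xz]; apply: nF; exists X, z.
  have Fgood : forall Y w, F Y -> Y w ->
      [/\ left_ideal Y, ~ Y 1 & forall z, I z -> Y z].
    move=> Y w FY Yw; case: (FP Y FY) => [h|//]; by case: (h w).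
  have [[[Y0_0 Y0D Y0N] Y0M] Y01 Y0I] := Fgood _ _ FX0 X0z0.
  right; split.
  + split; first split.
    * by exists X0.
    * move=> a b [X FX Xa] [Y FY Yb].
      have [[[_ XD _] _] _ _] := Fgood _ _ FX Xa.
      have [[[_ YD _] _] _ _] := Fgood _ _ FY Yb.
      case: (Ftot X Y FX FY) => sub.
      - by exists Y => //; apply: YD => //; apply: sub.
      - by exists X => //; apply: XD => //; apply: sub.
    * move=> a [X FX Xa]; have [[[_ _ XN] _] _ _] := Fgood _ _ FX Xa.
      by exists X => //; apply: XN.
    * move=> a r [X FX Xa]; have [[_ XM] _ _] := Fgood _ _ FX Xa.
      by exists X => //; apply: XM.
  + move=> [X FX X1]; have [_ h _] := Fgood _ _ FX X1; exact: h.
  + by move=> z Iz; exists X0 => //; apply: Y0I.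
- move=> L [PL Lmax].
  have lL : [/\ left_ideal L, ~ L 1 & forall z, I z -> L z].
    case: PL => [h|//]; exfalso; apply: (Lmax I); last by right.
    split; first by move=> z Lz; case: (h z).
    move=> sub; apply: (h 0); apply: sub; by case: lI => [[]].
  case: lL => lL nL1 IL.
  exists L; split => //; split => //.
  + by exists 1.
  move=> N lN [w nNw] LN a Na; apply: NNPP => nLa.
  apply: (Lmax N); last first.
    right; split => //.
      by move=> N1; apply: nNw; rewrite -(mulr1 w); case: lN => _; apply.
    by move=> z Iz; apply: LN; apply: IL.
  split; first by [].
  by move=> sub; apply: nLa; apply: sub.
Qed.

Section Main.
Variable A : nzRingType.

Lemma central_mul (a b : A) : central a -> central b -> central (a * b).
Proof. by move=> ha hb y; rewrite -mulrA hb mulrA ha mulrA. Qed.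

Lemma central_poly (p : {poly A}) : (forall i, central p`_i) -> central p.
Proof.
move=> h q; apply/polyP => i; rewrite coefM coefMr; apply: eq_bigr => j _.
by rewrite h.
Qed.

Lemma central0 (R : nzRingType) : central (0 : R).
Proof. by move=> y; rewrite mul0r mulr0. Qed.

Hypothesis H : forall a : A, ~ central a ->
    exists x y : A, [/\ x <> 0, y <> 0, central x, central y & a * x = y].

Lemma ce_step n : forall f : {poly A}, f != 0 ->
  (forall i, (n <= i)%N -> central f`_i) ->
  exists c, [/\ central c, f * c%:P != 0 & forall i, central (f * c%:P)`_i].
Proof.
elim: n => [|n IH] f fn0 hf.
  exists 1; rewrite polyC1 mulr1; split => //.
    by move=> y; rewrite mul1r mulr1.
  by move=> i; apply: hf.
case: (classic (central f`_n)) => cn.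
  apply: IH => // i; rewrite leq_eqVlt => /orP[/eqP <-//|]; exact: hf.
have [x [y [xn0 yn0 cx cy e]]] := H cn.
have gn : (f * x%:P)`_n = y by rewrite coefMC.
have [||c [cc gc hc]] := IH (f * x%:P).
- by apply/eqP => g0; apply: yn0; rewrite -gn g0 coef0.
- move=> i; rewrite leq_eqVlt => /orP[/eqP <-|lt]; first by rewrite gn.
  by rewrite coefMC; apply: central_mul => //; apply: hf.
exists (x * c); rewrite polyCM mulrA; split => //.
exact: central_mul.
Qed.

Lemma ce_poly : forall f : {poly A}, ~ central f ->
  exists x y : {poly A}, [/\ x <> 0, y <> 0, central x, central y & f * x = y].
Proof.
move=> f nf.
have fn0 : f != 0 by apply/eqP => f0; apply: nf; rewrite f0; apply: central0.
have [|c [cc gc hc]] := @ce_step (size f) f fn0.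
  by move=> i le; rewrite nth_default //; apply: central0.
exists c%:P, (f * c%:P); split => //.
- by move=> c0; move: gc; rewrite c0 mulr0 eqxx.
- by apply/eqP.
- by apply: central_poly => i; rewrite coefC; case: (i == 0)%N => //; apply: central0.
- exact: central_poly.
Qed.
End Main.

Lemma exists_L (A : nzRingType) (M : A -> Prop) c :
  maximal_right_ideal M -> ~ M c ->
  exists L, maximal_left_ideal L /\ ~ L c.
Proof.
move=> Mmx nMc; apply: NNPP => hn.
have hall : forall L, maximal_left_ideal L -> L c.
  by move=> L HL; apply: NNPP => nL; apply: hn; exists L.
have [v [m [Mm e]]] := comax_r Mmx nMc.
have linv : forall r, exists u, u * (1 - r * c) = 1.
  move=> r; apply: NNPP => nu.
  pose I := fun z : A => exists y, z = y * (1 - r * c).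
  have lI : left_ideal I.
    split; first split.
    - by exists 0; rewrite mul0r.
    - by move=> a b [y ->] [y' ->]; exists (y + y'); rewrite mulrDl.
    - by move=> a [y ->]; exists (- y); rewrite mulNr.
    - by move=> a r' [y ->]; exists (r' * y); rewrite mulrA.
  have [|L [Lmx IL]] := exists_max_left lI.
    by move=> [y e1]; apply: nu; exists y.
  have [[[L0 LD LN] LM] pL _] := Lmx.
  have nL1 : ~ L 1 by apply: lnot1 => //; split.
  apply: nL1.
  have -> : (1 : A) = (1 - r * c) + r * c by rewrite subrK.
  apply: LD; first by apply: IL; exists 1; rewrite mul1r.
  by apply: LM; apply: hall.
have [u hu] := linv v.
have [w hw] := linv (- (u * v)).
have eu : 1 - - (u * v) * c = u.
  by rewrite mulNr opprK -{1}hu mulrBr mulr1 mulrA subrK.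
rewrite eu in hw.
have ew : w = 1 - v * c by rewrite -[w]mulr1 -{1}hu mulrA hw mul1r.
rewrite ew in hw.
have em : m = 1 - c * v by rewrite -e addrAC subrr add0r.
have key : m * (1 + c * u * v) = 1.
  rewrite em mulrDr mulr1 mulrBl mul1r.
  have -> : c * u * v - c * v * (c * u * v) = c * ((1 - v * c) * u) * v.
    by rewrite mulrBl mul1r mulrBr mulrBl !mulrA.
  by rewrite hw mulr1 subrK.
have [[[M0 MD MN] MM] pM _] := Mmx.
have nM1 : ~ M 1 by apply: rnot1 => //; split.
by apply: nM1; rewrite -key; apply: MM.
Qed.

Theorem lemma2p2 (A : nzRingType) :
  centrally_essential A ->
  ~ factor_by_jacobson_commutative A ->
  centrally_essential {poly A} /\
  ~ right_quasi_invariant {poly A} /\ ~ left_quasi_invariant {poly A}.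
Proof.
move=> ceA nJ.
have [a [b nJab]] : exists a b : A, ~ jacobson (a * b - b * a).
  apply: NNPP => h; apply: nJ => a b; apply: NNPP => h'; apply: h; by exists a, b.
have [M [Mmx nMc]] : exists M, maximal_right_ideal M /\ ~ M (a * b - b * a).
  apply: NNPP => h; apply: nJab => M Mmx; apply: NNPP => h'; apply: h; by exists M.
have H : forall a : A, ~ central a ->
    exists x y : A, [/\ x <> 0, y <> 0, central x, central y & a * x = y].
  case: ceA => // comm; exfalso; apply: nMc; rewrite comm subrr.
  by case: Mmx => [[[]]].
split; first by right; apply: ce_poly.
split.
have [[[M0 MD MN] MM] pM _] := Mmx.
- move=> rqi.
  have Q0 := @Qr_max _ M 0 Mmx (fun m _ => eq_ind_r M M0 (mul0r m)).
  have [_ [_ hL]] := rqi _ Q0.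
  have MLc : forall r m, M m -> M (r * m).
    move=> r m Mm; have := hL m%:P r%:P; rewrite -polyCM !levrC; exact.
  have Qa := @Qr_max _ M a Mmx (fun m Mm => MLc a m Mm).
  have [_ [_ hLa]] := rqi _ Qa.
  apply: nMc; have := hLa ('X - a%:P) b%:P.
  rewrite mulrBr -polyCM !levrD !levrN levrMX !levrC levrX subrr; apply; exact: M0.
- move=> lqi.
  have [L [Lmx nLc]] := exists_L Mmx nMc.
  have [[[L0 LD LN] LM] pL _] := Lmx.
  have Q0 := @Ql_max _ L 0 Lmx (fun m _ => eq_ind_r L L0 (mulr0 m)).
  have [[_ hR] _] := lqi _ Q0.
  have LRc : forall r m, L m -> L (m * r).
    move=> r m Lm; have := hR m%:P r%:P; rewrite -polyCM !hornerC; exact.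
  have Qa := @Ql_max _ L a Lmx (fun m Lm => LRc a m Lm).
  have [[_ hRa] _] := lqi _ Qa.
  apply: nLc; rewrite -[_ - _]opprK opprB; apply: LN.
  have := hRa ('X - a%:P) b%:P.
  rewrite mulrBl -polyCM -commr_polyX !hornerD !hornerN hornerMX !hornerC hornerX subrr.
  apply; exact: L0.
Qed.
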